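(* Let $\mathcal C_1,\dots,\mathcal C_m\subset\mathbb{R}^P$ be compact convex sets each containing the origin as an interior point, and $G_i=\gamma_{\mathcal C_i}$ their gauges. For each $i$ let $L_{2,i}>0$ be a constant such that $\|\mathrm{Prox}_{tG_i}(y)-\mathrm{Prox}_{t'G_i}(y)\|\le L_{2,i}|t-t'|$ for all $t,t'>0$ and all $y\in\mathbb{R}^P$. Then for any $\theta,\theta'\in\,]0,+\infty[^m$ and any $y\in\mathbb{R}^P$, $$\big\|\mathrm{Prox}_{\theta_1G_1}\circ\cdots\circ\mathrm{Prox}_{\theta_mG_m}(y)-\mathrm{Prox}_{\theta'_1G_1}\circ\cdots\circ\mathrm{Prox}_{\theta'_mG_m}(y)\big\|\le\sqrt m\,\max_iL_{2,i}\,\|\theta-\theta'\|.$$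
   Context: The gauge of a non-empty closed convex set $\mathcal C$ containing the origin is $\gamma_{\mathcal C}(y)=\inf\{\omega>0: y\in\omega\mathcal C\}$. $\mathrm{Prox}_{G}(y)=\operatorname{argmin}_z\frac12\|z-y\|^2+G(z)$. Such constants $L_{2,i}$ exist for gauges of compact convex sets with the origin in their interior. *)

(* Defs.v *)
From HB Require Import structures.
From mathcomp Require Import all_boot all_order all_algebra.
From mathcomp Require Import all_classical all_reals all_analysis.
Set Implicit Arguments. Unset Strict Implicit. Unset Printing Implicit Defensive.
Import Order.TTheory GRing.Theory Num.Theory.
Import numFieldNormedType.Exports.
Local Open Scope classical_set_scope.
Local Open Scope ring_scope.

Definition enorm {R : realType} {n : nat} (v : 'rV[R]_n) : R :=
  Num.sqrt (\sum_(i < n) v ord0 i ^+ 2).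

Definition convex_set_of {R : realType} {n : nat} (C : set 'rV[R]_n) : Prop :=
  forall x y (l : R), C x -> C y -> 0 <= l -> l <= 1 -> C (l *: x + (1 - l) *: y).

Definition gauge {R : realType} {n : nat} (C : set 'rV[R]_n) (y : 'rV[R]_n) : R :=
  inf [set w : R | 0 < w /\ exists c, C c /\ y = w *: c].

Definition prox {R : realType} {n : nat} (G : 'rV[R]_n -> R) (y : 'rV[R]_n) : 'rV[R]_n :=
  xget 0 [set z | forall w, 2^-1 * enorm (z - y) ^+ 2 + G z <= 2^-1 * enorm (w - y) ^+ 2 + G w].

(* Prox_{th_0 G_0} o ... o Prox_{th_(m-1) G_(m-1)} (y) *)
Definition comp_prox {R : realType} {n m : nat} (G : 'I_m -> 'rV[R]_n -> R)
  (th : 'I_m -> R) (y : 'rV[R]_n) : 'rV[R]_n :=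
  foldr (fun i acc => prox (fun z => th i * G i z) acc) y (enum 'I_m).

(* Main.v *)
Require Import Defs.
From HB Require Import structures.
From mathcomp Require Import all_boot all_order all_algebra.
From mathcomp Require Import all_classical all_reals all_analysis.
From mathcomp Require Import ring lra.
Import Order.TTheory GRing.Theory Num.Theory.
Import numFieldNormedType.Exports.
Local Open Scope classical_set_scope.
Local Open Scope ring_scope.

Section E.
Context {R : realType} {n : nat}.
Definition sq (v : 'rV[R]_n) := \sum_(i < n) v ord0 i ^+ 2.
Definition dot (a b : 'rV[R]_n) := \sum_(i < n) a ord0 i * b ord0 i.

Lemma sq_ge0 (v : 'rV[R]_n) : 0 <= sq v.
Proof. by apply: sumr_ge0 => i _; rewrite sqr_ge0. Qed.

Lemma enorm_sq (v : 'rV[R]_n) : enorm v ^+ 2 = sq v.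
Proof. by rewrite /enorm sqr_sqrtr // sq_ge0. Qed.

Lemma enorm_ge0 (v : 'rV[R]_n) : 0 <= enorm v.
Proof. exact: sqrtr_ge0. Qed.

Lemma sq0 (v : 'rV[R]_n) : sq v = 0 -> forall i, v ord0 i = 0.
Proof.
move=> h i; apply/eqP; rewrite -sqrf_eq0; apply/eqP.
apply/eqP; rewrite eq_le sqr_ge0 andbT -h /sq (bigD1 i) //= lerDl.
by apply: sumr_ge0 => j _; rewrite sqr_ge0.
Qed.

Lemma cs (a b : 'rV[R]_n) : dot a b <= enorm a * enorm b.
Proof.
set u := enorm a; set v := enorm b.
have hu : u ^+ 2 = sq a by exact: enorm_sq.
have hv : v ^+ 2 = sq b by exact: enorm_sq.
have u0 : 0 <= u by exact: enorm_ge0.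
have v0 : 0 <= v by exact: enorm_ge0.
have key : 0 <= \sum_(i < n) (v * a ord0 i - u * b ord0 i) ^+ 2.
  by apply: sumr_ge0 => i _; rewrite sqr_ge0.
have e : \sum_(i < n) (v * a ord0 i - u * b ord0 i) ^+ 2
   = v ^+ 2 * sq a - 2 * (u * v) * dot a b + u ^+ 2 * sq b.
  rewrite /sq /dot !mulr_sumr -sumrN -!big_split /=.
  by apply: eq_bigr => i _; ring.
rewrite e hu hv in key.
have [uv0|uv0] := eqVneq (u * v) 0.
  move/eqP: uv0; rewrite mulf_eq0 => /orP[] /eqP h0.
  - have : sq a = 0 by rewrite -hu h0 expr2 mulr0.
    move/sq0 => z; rewrite /dot big1 ?h0 ?mul0r // => i _; by rewrite z mul0r.
  - have : sq b = 0 by rewrite -hv h0 expr2 mulr0.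
    move/sq0 => z; rewrite /dot big1 ?h0 ?mulr0 // => i _; by rewrite z mulr0.
have p : 0 < u * v by rewrite lt0r uv0 mulr_ge0.
have : 0 <= (u * v) * (u * v - dot a b) by nra.
by rewrite pmulr_rge0 // subr_ge0.
Qed.

Lemma sq_add (a b : 'rV[R]_n) : sq (a + b) = sq a + 2 * dot a b + sq b.
Proof.
rewrite /sq /dot mulr_sumr -!big_split /=; apply: eq_bigr => i _.
by rewrite mxE; ring.
Qed.

Lemma enorm_triangle (a b : 'rV[R]_n) : enorm (a + b) <= enorm a + enorm b.
Proof.
have h1 := enorm_ge0 a; have h2 := enorm_ge0 b; have h3 := enorm_ge0 (a + b).
have := cs a b.
have e1 := enorm_sq a; have e2 := enorm_sq b; have e3 := enorm_sq (a + b).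
rewrite sq_add in e3.
move=> h.
rewrite -(ler_pXn2r (n:=2)) ?nnegrE ?addr_ge0 //.
rewrite e3 sqrrD e1 e2; nra.
Qed.

End E.
Lemma intball (R : realType) n (C : set 'rV[R]_n) : interior C 0 ->
  exists2 r : R, 0 < r & forall x, `|x| < r -> C x.
Proof.
move=> /nbhs_normP [r r0 h]; exists r => // x hx; apply: h => /=.
by rewrite sub0r normrN.
Qed.

Lemma le_eps (R : realType) (x y : R) : (forall e, 0 < e -> x <= y + e) -> x <= y.
Proof. by move=> h; apply/ler_addgt0Pr. Qed.

Lemma aux1 (R : realType) (r x : R) : 0 < r -> 0 <= x -> x < 2 * x + r.
Proof. move=> *; lra. Qed.

Lemma aux2 (R : realType) (r : R) : 0 < r -> r < r * 2.
Proof. move=> *; lra. Qed.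

Lemma aux3 (R : realType) (x y u v K : R) : x <= y + u -> y <= x + v ->
  u <= K -> v <= K -> `|x - y| <= K.
Proof. by move=> *; rewrite ler_norml; apply/andP; split; lra. Qed.

Section Gauge.
Context {R : realType} {n : nat} (C : set 'rV[R]_n) (hconv : convex_set_of C)
  (r : R) (r0 : 0 < r) (hb : forall x, `|x| < r -> C x).

Let Sg (a : 'rV[R]_n) := [set w : R | 0 < w /\ exists c, C c /\ a = w *: c].

Lemma C0 : C 0.
Proof. by apply: hb; rewrite normr0. Qed.

Lemma Sg_ne a : Sg a !=set0.
Proof.
set w := 2 * `|a| / r + 1.
have w0 : 0 < w.
  have h : 0 <= 2 * `|a| / r by rewrite divr_ge0 ?mulr_ge0 // ltW.
  rewrite /w; lra.
exists w; split => //; exists (w^-1 *: a); split; last first.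
  by rewrite scalerA divff ?scale1r // gt_eqF.
apply: hb; rewrite normrZ gtr0_norm ?invr_gt0 // mulrC ltr_pdivrMr //.
have e : r * (2 * `|a| / r) = 2 * `|a| by rewrite mulrC mulfVK // gt_eqF.
rewrite /w mulrDr mulr1 e; have := normr_ge0 a; exact: aux1.
Qed.

Lemma Sg_lb a : lbound (Sg a) 0.
Proof. by move=> w [w0 _]; apply: ltW. Qed.

Lemma Sg_inf a : has_inf (Sg a).
Proof. by split; [exact: Sg_ne | exists 0; exact: Sg_lb]. Qed.

Lemma gauge_ge0 a : 0 <= gauge C a.
Proof. by apply: lb_le_inf; [exact: Sg_ne | exact: Sg_lb]. Qed.

Lemma gauge_le a w : Sg a w -> gauge C a <= w.
Proof. by move=> h; apply: (ge_inf (proj2 (Sg_inf a))). Qed.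

Lemma gauge0 : gauge C 0 <= 0.
Proof.
apply: le_eps => e e0; rewrite add0r; apply: gauge_le; split => //.
by exists 0; split; [exact: C0 | rewrite scaler0].
Qed.

Lemma gauge_comb a b (al be : R) : 0 <= al -> 0 <= be ->
  gauge C (al *: a + be *: b) <= al * gauge C a + be * gauge C b.
Proof.
move=> al0 be0.
have [s0|s0] := eqVneq (al + be) 0.
  have a0 : al = 0 by lra.
  have b0 : be = 0 by lra.
  rewrite a0 b0 !scale0r !mul0r !addr0; exact: gauge0.
have sp : 0 < al + be by rewrite lt0r s0 addr_ge0.
have claim : forall wa wb, Sg a wa -> Sg b wb ->
    gauge C (al *: a + be *: b) <= al * wa + be * wb.
  move=> wa wb [wa0 [ca [Cca ea]]] [wb0 [cb [Ccb eb]]].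
  set w := al * wa + be * wb.
  have w0 : 0 < w.
    rewrite /w; have [al00|al00] := eqVneq al 0.
      rewrite al00 mul0r add0r mulr_gt0 //; lra.
    have : 0 < al * wa by rewrite mulr_gt0 //; lra.
    have : 0 <= be * wb by rewrite mulr_ge0 // ltW.
    lra.
  set l := al * wa / w.
  have e1 : w * l = al * wa by rewrite /l mulrCA mulfV ?gt_eqF // mulr1.
  have e2 : w * (1 - l) = be * wb by rewrite mulrBr mulr1 e1 /w; ring.
  have l0 : 0 <= l by rewrite /l divr_ge0 ?mulr_ge0 // ltW.
  have l1 : l <= 1 by rewrite /l ler_pdivrMr // mul1r /w; nra.
  apply: gauge_le; split => //; exists (l *: ca + (1 - l) *: cb); split.
    exact: hconv.
  by rewrite scalerDr !scalerA e1 e2 ea eb !scalerA.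
apply: le_eps => e e0.
set e1 := e / (al + be).
have e10 : 0 < e1 by rewrite divr_gt0.
have [wa Swa hwa] := inf_adherent e10 (Sg_inf a).
have [wb Swb hwb] := inf_adherent e10 (Sg_inf b).
apply: (le_trans (claim _ _ Swa Swb)).
have ee : (al + be) * e1 = e by rewrite /e1 mulrCA mulfV ?mulr1.
rewrite /gauge -/(Sg a) -/(Sg b) -ee; nra.
Qed.

Lemma gauge_lin a : gauge C a <= 2 / r * `|a|.
Proof.
have [->|a0] := eqVneq a 0.
  by rewrite normr0 mulr0; exact: gauge0.
have na : 0 < `|a| by rewrite normr_gt0.
set w := 2 / r * `|a|.
have w0 : 0 < w by rewrite /w mulr_gt0 // divr_gt0.
apply: gauge_le; split => //; exists (w^-1 *: a); split; last first.
  by rewrite scalerA divff ?scale1r // gt_eqF.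
apply: hb; rewrite normrZ gtr0_norm ?invr_gt0 // /w invfM invf_div.
rewrite -mulrA mulVf ?gt_eqF // mulr1 ltr_pdivrMr //; exact: aux2.
Qed.

Lemma gauge_lip a b : `|gauge C a - gauge C b| <= 2 / r * `|a - b|.
Proof.
have h1 : gauge C a <= gauge C b + gauge C (a - b).
  have := gauge_comb b (a - b) 1 1 ler01 ler01.
  by rewrite !scale1r !mul1r addrC subrK.
have h2 : gauge C b <= gauge C a + gauge C (b - a).
  have := gauge_comb a (b - a) 1 1 ler01 ler01.
  by rewrite !scale1r !mul1r addrC subrK.
have h3 := gauge_lin (a - b); have h4 := gauge_lin (b - a).
rewrite [`|b - a|]distrC in h4.
exact: aux3 h1 h2 h3 h4.
Qed.

End Gauge.

Lemma lip_cont (R : realType) n (f : 'rV[R]_n -> R) (k : R) : 0 < k ->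
  (forall a b, `|f a - f b| <= k * `|a - b|) -> continuous f.
Proof.
move=> k0 hf x.
have H : forall e : R, 0 < e -> \forall z \near x, `|x - z| < k^-1 * e.
  move=> e e0; apply/nbhs_normP; exists (k^-1 * e); first by rewrite /= mulr_gt0 // invr_gt0.
  by move=> z /=.
apply/(@cvgrPdist_lt _ _ _ _ (nbhs_filter x)) => e e0.
move: (H e e0); apply: filterS => z hz.
apply: (le_lt_trans (hf x z)); by rewrite -ltr_pdivlMl.
Qed.

Lemma cont_sum (R : realType) (T : topologicalType) (I : Type) (s : seq I)
  (F : I -> T -> R) : (forall i, continuous (F i)) ->
  continuous (fun z => \sum_(i <- s) F i z).
Proof.
move=> h; elim: s => [|i s IH].
  have -> : (fun z => \sum_(i <- [::]) F i z) = (fun=> 0) by apply/funext => z; rewrite big_nil.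
  exact: cst_continuous.
have -> : (fun z => \sum_(j <- i :: s) F j z) = F i + (fun z => \sum_(j <- s) F j z).
  by apply/funext => z; rewrite big_cons.
by move=> x; apply: continuousD; [exact: h | exact: IH].
Qed.

Lemma sq_cont (R : realType) n (y : 'rV[R]_n) : continuous (fun z : 'rV[R]_n => sq (z - y)).
Proof.
apply: cont_sum => i.
have -> : (fun z : 'rV[R]_n => (z - y) ord0 i ^+ 2) =
   (fun z => z ord0 i - y ord0 i) \* (fun z => z ord0 i - y ord0 i).
  by apply/funext => z; rewrite /= !mxE expr2.
have c1 : continuous (fun z : 'rV[R]_n => z ord0 i) := @coord_continuous R 1 n ord0 i.
have c2 : continuous (fun z : 'rV[R]_n => z ord0 i - y ord0 i).
  have -> : (fun z : 'rV[R]_n => z ord0 i - y ord0 i) =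
     (fun z : 'rV[R]_n => z ord0 i) - cst (y ord0 i) by [].
  by move=> x; apply: continuousB; [exact: c1 | exact: cst_continuous].
by move=> x; exact: (continuousM (c2 x) (c2 x)).
Qed.

Lemma sq_coord (R : realType) n (v : 'rV[R]_n) i : v ord0 i ^+ 2 <= sq v.
Proof.
rewrite /sq (bigD1 i) //= lerDl; by apply: sumr_ge0 => j _; rewrite sqr_ge0.
Qed.

Lemma sq_zero (R : realType) n : sq (0 : 'rV[R]_n) = 0.
Proof. by rewrite /sq big1 // => i _; rewrite mxE expr2 mulr0. Qed.

Lemma aux4 (R : realType) (rho g d t : R) : rho = t * g + 2 -> 0 <= t * g ->
  rho < `|d| -> t * g < 2^-1 * d ^+ 2.
Proof.
move=> -> h1 h2.
have h3 : t * g + 2 < `|d| by [].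
have h4 : `|d| ^+ 2 = d ^+ 2 by rewrite real_normK // num_real.
rewrite -h4; have h5 := normr_ge0 d; nra.
Qed.

Lemma aux5 (R : realType) (a b c : R) : - c <= a - b -> b - c <= a.
Proof. move=> *; lra. Qed.
Lemma aux6 (R : realType) (a b c : R) : a - b <= c -> a <= b + c.
Proof. move=> *; lra. Qed.

Lemma aux7 (R : realType) (a b g : R) : a <= b -> 0 <= g -> 2^-1 * a <= 2^-1 * b + g.
Proof. move=> *; lra. Qed.

Section Exist.
Context {R : realType} {n : nat} (C : set 'rV[R]_n) (hconv : convex_set_of C)
  (r : R) (r0 : 0 < r) (hb : forall x, `|x| < r -> C x) (t : R) (t0 : 0 < t).

Definition obj (y z : 'rV[R]_n) := 2^-1 * enorm (z - y) ^+ 2 + t * gauge C z.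

Lemma obj_cont y : continuous (obj y).
Proof.
have -> : obj y = (fun z => 2^-1 * sq (z - y)) \+ (fun z => t * gauge C z).
  by apply/funext => z; rewrite /obj enorm_sq.
have cg : continuous (gauge C).
  apply: (@lip_cont _ _ _ (2 / r)); first by rewrite divr_gt0.
  move=> a b; have := @gauge_lip R n C hconv r r0 hb a b; exact.
move=> x; apply: continuousD.
  have -> : (fun z => 2^-1 * sq (z - y)) = cst 2^-1 \* (fun z => sq (z - y)) by [].
  by apply: continuousM; [exact: cst_continuous | exact: sq_cont].
have -> : (fun z => t * gauge C z) = cst t \* gauge C by [].
by apply: continuousM; [exact: cst_continuous | exact: cg].
Qed.

Lemma obj_min y : exists p, forall w, obj y p <= obj y w.
Proof.
set rho := t * gauge C y + 2.
set K := [set v : 'rV[R]_n | forall i, `[y ord0 i - rho, y ord0 i + rho]%classic (v ord0 i)].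
have Kc : compact K.
  apply: (@rV_compact _ _ (fun i => `[y ord0 i - rho, y ord0 i + rho]%classic)).
  by move=> i; exact: segment_compact.
have tg : 0 <= t * gauge C y by rewrite mulr_ge0 ?(@gauge_ge0 R n C r r0 hb) // ltW.
have rho0 : 0 <= rho by rewrite /rho addr_ge0.
have yK : K y.
  move=> i /=; rewrite in_itv /=; apply/andP; split.
    by rewrite lerBlDr lerDl.
  by rewrite lerDl.
have cc : {within K, continuous (obj y)}.
  by apply: continuous_subspaceT; exact: obj_cont.
have [c cK hc] := compact_EVT_min (ex_intro _ y yK) Kc cc.
exists c => w.
have [wK|wK] := pselect (K w).
  by apply: hc; rewrite inE.
have hcy : obj y c <= obj y y by apply: hc; rewrite inE.
apply: (le_trans hcy).
have -> : obj y y = t * gauge C y by rewrite /obj subrr enorm_sq sq_zero mulr0 add0r.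
have [i hi] : exists i, ~ `[y ord0 i - rho, y ord0 i + rho]%classic (w ord0 i).
  by apply/existsNP => h; apply: wK => j; exact: h.
have hi' : rho < `|w ord0 i - y ord0 i|.
  rewrite ltNge; apply/negP => h; apply: hi => /=; rewrite in_itv /=.
  move: h; rewrite ler_norml => /andP[h1 h2]; apply/andP; split.
    exact: aux5.
  exact: aux6.
have := @aux4 R rho (gauge C y) (w ord0 i - y ord0 i) t (erefl rho) tg hi'.
have hs := @sq_coord R n (w - y) i; rewrite !mxE in hs.
have hG : 0 <= t * gauge C w by rewrite mulr_ge0 ?(@gauge_ge0 R n C r r0 hb) // ltW.
rewrite /obj enorm_sq => h.
apply: ltW; apply: (lt_le_trans h).
exact: aux7 hs hG.
Qed.

End Exist.

Lemma aux8 (R : realType) (a b c : R) : 0 <= c ->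
  (forall s, 0 < s -> s <= 1 -> a <= b + s * c) -> a <= b.
Proof.
move=> c0 h; apply: le_eps => e e0.
set s := e / (e + c + 1).
have d0 : 0 < e + c + 1 by lra.
have s0 : 0 < s by rewrite divr_gt0.
have s1 : s <= 1 by rewrite /s ler_pdivrMr // mul1r; lra.
have sc : s * c <= e by rewrite /s mulrAC ler_pdivrMr //; nra.
have := h s s0 s1; lra.
Qed.

Lemma dotZr (R : realType) n (a b : 'rV[R]_n) s : dot a (s *: b) = s * dot a b.
Proof. by rewrite /dot mulr_sumr; apply: eq_bigr => i _; rewrite mxE; ring. Qed.

Lemma sqZ (R : realType) n (b : 'rV[R]_n) s : sq (s *: b) = s ^+ 2 * sq b.
Proof. by rewrite /sq mulr_sumr; apply: eq_bigr => i _; rewrite mxE; ring. Qed.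

Lemma aux9 (R : realType) (P D Q s tp tw : R) : 0 < s -> s <= 1 ->
  2^-1 * P + tp <= 2^-1 * (P + 2 * (s * D) + s ^+ 2 * Q) + ((1 - s) * tp + s * tw) ->
  - D <= tw - tp + s * (2^-1 * Q).
Proof.
move=> s0 s1 h.
have h2 : 0 <= s * (D + s * (2^-1 * Q) + tw - tp) by nra.
have := h2; rewrite pmulr_rge0 // => h3; lra.
Qed.

Lemma aux10 (R : realType) (a b c d e f : R) :
  - c <= f - e -> - d <= e - f -> 0 <= b -> a <= a + b + 2 * c + 2 * d.
Proof. move=> *; lra. Qed.

Section Prox.
Context {R : realType} {n : nat} (C : set 'rV[R]_n) (hconv : convex_set_of C)
  (r : R) (r0 : 0 < r) (hb : forall x, `|x| < r -> C x) (t : R) (t0 : 0 < t).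

Lemma prox_min y w : obj C t y (prox (fun z => t * gauge C z) y) <= obj C t y w.
Proof.
have := @xgetPex _ 0 [set z | forall w, 2^-1 * enorm (z - y) ^+ 2 + t * gauge C z
   <= 2^-1 * enorm (w - y) ^+ 2 + t * gauge C w] (@obj_min R n C hconv r r0 hb t t0 y).
by move=> /(_ w).
Qed.

Lemma var_ineq y p : (forall w, obj C t y p <= obj C t y w) ->
  forall w, - dot (p - y) (w - p) <= t * gauge C w - t * gauge C p.
Proof.
move=> hp w.
apply: (@aux8 R _ _ (2^-1 * sq (w - p))).
  by rewrite mulr_ge0 ?invr_ge0 // sq_ge0.
move=> s s0 s1.
have := hp ((1 - s) *: p + s *: w).
have e : (1 - s) *: p + s *: w - y = (p - y) + s *: (w - p).
  by apply/rowP => i; rewrite !mxE; ring.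
rewrite /obj !enorm_sq e (sq_add (p - y)) dotZr sqZ.
have s1' : 0 <= 1 - s by rewrite subr_ge0.
have hg := @gauge_comb R n C hconv r r0 hb p w (1 - s) s s1' (ltW s0).
move=> h.
have h' : 2^-1 * sq (p - y) + t * gauge C p <=
   2^-1 * (sq (p - y) + 2 * (s * dot (p - y) (w - p)) + s ^+ 2 * sq (w - p)) +
   ((1 - s) * (t * gauge C p) + s * (t * gauge C w)).
  apply: (le_trans h); rewrite lerD2l.
  have : t * gauge C ((1 - s) *: p + s *: w) <= t * ((1 - s) * gauge C p + s * gauge C w).
    by rewrite ler_pM2l.
  by rewrite mulrDr (mulrCA t (1 - s)) (mulrCA t s).
exact: aux9 h'.
Qed.

Lemma prox_nonexp y1 y2 :
  enorm (prox (fun z => t * gauge C z) y1 - prox (fun z => t * gauge C z) y2)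
  <= enorm (y1 - y2).
Proof.
set p1 := prox _ y1; set p2 := prox _ y2.
have V1 := @var_ineq y1 p1 (prox_min y1) p2.
have V2 := @var_ineq y2 p2 (prox_min y2) p1.
have id : sq (y1 - y2) = sq (p1 - p2) + sq ((y1 - y2) - (p1 - p2))
    + 2 * dot (p1 - y1) (p2 - p1) + 2 * dot (p2 - y2) (p1 - p2).
  rewrite /sq /dot !mulr_sumr -!big_split /=; apply: eq_bigr => i _; rewrite !mxE; ring.
have hq := sq_ge0 ((y1 - y2) - (p1 - p2)).
have : sq (p1 - p2) <= sq (y1 - y2).
  rewrite id; exact: aux10 V1 V2 hq.
by rewrite /enorm ler_sqrt // sq_ge0.
Qed.

End Prox.

Lemma bigmax_ub (R : realType) (I : eqType) (s : seq I) (f : I -> R) :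
  0 <= \big[Num.max/0]_(i <- s) f i /\
  forall j, j \in s -> f j <= \big[Num.max/0]_(i <- s) f i.
Proof.
elim: s => [|a s [IH1 IH2]].
  by rewrite big_nil; split => // j; rewrite in_nil.
rewrite big_cons; split; first by rewrite le_max IH1 orbT.
move=> j; rewrite in_cons => /orP[/eqP->|hj]; first by rewrite le_max lexx.
by rewrite le_max IH2 ?orbT.
Qed.

Lemma enorm0 (R : realType) n : enorm (0 : 'rV[R]_n) = 0.
Proof. by rewrite /enorm -/(sq _) sq_zero sqrtr0. Qed.

Lemma sum_abs_le (R : realType) m (d : 'rV[R]_m) :
  \sum_(i < m) `|d ord0 i| <= Num.sqrt (m%:R) * enorm d.
Proof.
set a : 'rV[R]_m := \row_i `|d ord0 i|.
set b : 'rV[R]_m := \row_i 1.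
have := cs a b.
have -> : dot a b = \sum_(i < m) `|d ord0 i| by apply: eq_bigr => i _; rewrite !mxE mulr1.
have -> : enorm a = enorm d.
  by rewrite /enorm; congr Num.sqrt; apply: eq_bigr => i _; rewrite mxE real_normK // num_real.
have -> : enorm b = Num.sqrt (m%:R).
  rewrite /enorm; congr Num.sqrt.
  by rewrite (eq_bigr (fun=> 1)) ?sumr_const ?card_ord // => i _; rewrite mxE expr1n.
by rewrite mulrC.
Qed.
Theorem corollary5 (R : realType) (P m : nat) (C : 'I_m -> set 'rV[R]_P)
  (L : 'I_m -> R)
  (hcomp : forall i, compact (C i))
  (hconv : forall i, convex_set_of (C i))
  (hint : forall i, interior (C i) 0)
  (hLpos : forall i, 0 < L i)
  (hL : forall i (t t' : R) (y : 'rV[R]_P), 0 < t -> 0 < t' ->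
     enorm (prox (fun z => t * gauge (C i) z) y - prox (fun z => t' * gauge (C i) z) y)
       <= L i * `|t - t'|)
  (th th' : 'rV[R]_m) (hth : forall i, 0 < th ord0 i) (hth' : forall i, 0 < th' ord0 i)
  (y : 'rV[R]_P) :
  enorm (comp_prox (fun i => gauge (C i)) (fun i => th ord0 i) y
         - comp_prox (fun i => gauge (C i)) (fun i => th' ord0 i) y)
  <= Num.sqrt (m%:R) * (\big[Num.max/0]_(i < m) L i) * enorm (th - th').
Proof.
have nonexp : forall i (t : R) a b, 0 < t ->
    enorm (prox (fun z => t * gauge (C i) z) a - prox (fun z => t * gauge (C i) z) b)
    <= enorm (a - b).
  move=> i t a b t0; have [r r0 hb] := @intball R P (C i) (hint i).
  exact: (@prox_nonexp R P (C i) (hconv i) r r0 hb t t0).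
pose F (t : 'I_m -> R) (s : seq 'I_m) :=
  foldr (fun i acc => prox (fun z => t i * gauge (C i) z) acc) y s.
have tele : forall s, enorm (F (fun i => th ord0 i) s - F (fun i => th' ord0 i) s)
    <= \sum_(i <- s) L i * `|th ord0 i - th' ord0 i|.
  elim => [|i s IH].
    by rewrite big_nil /F /= subrr enorm0.
  rewrite big_cons /=.
  set a := F _ s; set b := F _ s.
  set pa := prox _ a; set pb := prox _ b.
  set qb := prox (fun z => th ord0 i * gauge (C i) z) b.
  have -> : pa - pb = (pa - qb) + (qb - pb) by rewrite addrA subrK.
  apply: (le_trans (enorm_triangle _ _)).
  rewrite addrC; apply: lerD; last first.
    exact: (le_trans (nonexp i _ a b (hth i)) IH).
  exact: hL.
have E : enum 'I_m = index_enum 'I_m by rewrite enumT [index_enum _]unlock.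
have h1 := tele (enum 'I_m).
rewrite E in h1.
rewrite /comp_prox -/(F _ _) -/(F _ _) E.
apply: (le_trans h1).
have [M0 Mub] := @bigmax_ub R _ (index_enum 'I_m) L.
set M := \big[Num.max/0]_(i < m) L i.
apply: (@le_trans _ _ (M * \sum_(i < m) `|th ord0 i - th' ord0 i|)).
  rewrite mulr_sumr; apply: ler_sum => i _.
  by rewrite ler_wpM2r // Mub.
have h := @sum_abs_le R m (th - th').
rewrite -mulrA mulrCA; apply: ler_wpM2l => //.
apply: (le_trans _ h); apply: ler_sum => i _.
have -> : (th - th') ord0 i = th ord0 i - th' ord0 i by rewrite !mxE.
by [].

Qed.
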